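(* For all positive real numbers $a,b,c$ and every integer $n\ge 1$, $$\sum_{k=1}^{n}\binom{n}{k}(ab+c)^{n-k}(ab+2c)^{k}\,a^{\xi(k)}\,(ab)^{\lfloor k/2\rfloor}\,c^{\,n-k}\,F_k^{(a,b,c)}=F_{4n}^{(a,b,c)}.$$
   Context: For positive real numbers $a,b,c$, the generalized Fibonacci numbers $F_m^{(a,b,c)}$ are defined by $F_0^{(a,b,c)}=0$, $F_1^{(a,b,c)}=1$, and for $m\ge 2$: $F_m^{(a,b,c)}=a\,F_{m-1}^{(a,b,c)}+c\,F_{m-2}^{(a,b,c)}$ if $m$ is even, and $F_m^{(a,b,c)}=b\,F_{m-1}^{(a,b,c)}+c\,F_{m-2}^{(a,b,c)}$ if $m$ is odd. For an integer $k$, $\lfloor k/2\rfloor$ denotes the floor of $k/2$ and $\xi(k):=k-2\lfloor k/2\rfloor$. *)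

(* Defs.v *)
From Stdlib Require Import Reals Arith Lia.
Open Scope R_scope.

(* Generalized Fibonacci numbers F_m^{(a,b,c)}, computed as pairs
   (F_m, F_{m+1}). F_0 = 0, F_1 = 1; for m >= 2,
   F_m = a F_{m-1} + c F_{m-2} if m even, b F_{m-1} + c F_{m-2} if m odd. *)
Fixpoint genFib_pair (a b c : R) (m : nat) : R * R :=
  match m with
  | O => (0, 1)
  | S m' =>
      let (x, y) := genFib_pair a b c m' in
      (* x = F_{m'}, y = F_{m'+1}; next = F_{m'+2}, index m'+2 = m+1 *)
      (y, (if Nat.even (S m) then a else b) * y + c * x)
  end.

Definition genFib (a b c : R) (m : nat) : R := fst (genFib_pair a b c m).

Definition xi (k : nat) : nat := (k - 2 * Nat.div2 k)%nat.

Lemma genFib_0 a b c : genFib a b c 0 = 0. Proof. reflexivity. Qed.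
Lemma genFib_1 a b c : genFib a b c 1 = 1. Proof. reflexivity. Qed.
Lemma genFib_2 a b c : genFib a b c 2 = a * 1 + c * 0. Proof. reflexivity. Qed.
Lemma genFib_3 a b c : genFib a b c 3 = b * (a * 1 + c * 0) + c * 1. Proof. reflexivity. Qed.
Lemma genFib_SS a b c m :
  genFib a b c (S (S m)) =
  (if Nat.even (S (S m)) then a else b) * genFib a b c (S m) + c * genFib a b c m.
Proof.
  unfold genFib; simpl. destruct (genFib_pair a b c m) as [x y]; reflexivity.
Qed.

(* Main.v *)
Require Import Defs.
From Stdlib Require Import Reals Arith Lia Lra FunctionalExtensionality.
Open Scope R_scope.

Definition G a b c k := a ^ xi k * (a*b) ^ Nat.div2 k * genFib a b c k.

Lemma ev2 j : Nat.even (2*j) = true.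
Proof. apply Nat.even_spec; exists j; reflexivity. Qed.
Lemma od2 j : Nat.even (S (2*j)) = false.
Proof. rewrite Nat.even_succ. rewrite <- Nat.negb_even, ev2. reflexivity. Qed.

Lemma Geven a b c j : G a b c (2*j) = (a*b)^j * genFib a b c (2*j).
Proof. unfold G, xi. rewrite Nat.div2_double. replace (2*j - 2*j)%nat with 0%nat by lia. simpl; ring. Qed.
Lemma Godd a b c j : G a b c (S (2*j)) = a * (a*b)^j * genFib a b c (S (2*j)).
Proof. unfold G, xi. rewrite Nat.div2_succ_double. replace (S (2*j) - 2*j)%nat with 1%nat by lia. simpl; ring. Qed.

Lemma Grec a b c k : G a b c (S (S k)) = (a*b) * G a b c (S k) + (a*b*c) * G a b c k.
Proof.
  destruct (Nat.Even_or_Odd k) as [[j ->]|[j ->]].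
  - replace (S (S (2*j))) with (2 * S j)%nat by lia.
    rewrite Geven, Godd, Geven.
    replace (2 * S j)%nat with (S (S (2*j))) by lia.
    rewrite genFib_SS.
    replace (Nat.even (S (S (2*j)))) with true by (rewrite <- (ev2 (S j)); f_equal; lia).
    simpl; ring.
  - replace (S (S (2*j+1))) with (S (2 * S j))%nat by lia.
    replace (S (2*j+1)) with (2 * S j)%nat by lia.
    replace (2*j+1)%nat with (S (2*j)) by lia.
    rewrite Godd, Geven, Godd.
    replace (S (2 * S j)) with (S (S (S (2*j)))) by lia.
    rewrite genFib_SS.
    replace (Nat.even (S (S (S (2*j))))) with false by (rewrite <- (od2 (S j)); f_equal; lia).
    replace (2 * S j)%nat with (S (S (2*j))) by lia.
    simpl; ring.
Qed.

Lemma Grec4 a b c j : G a b c (j+4) =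
  (a*b)^2 * (c*(a*b+c) * G a b c j + (a*b+2*c) * G a b c (S j)).
Proof.
  replace (j+4)%nat with (S (S (S (S j)))) by lia.
  rewrite !Grec. ring.
Qed.

Definition T X Y n (g : nat -> R) := sum_f_R0 (fun k => C n k * X^(n-k) * Y^k * g k) n.

Lemma Cn0 n : C n 0 = 1.
Proof. unfold C. rewrite Nat.sub_0_r. simpl. field. apply INR_fact_neq_0. Qed.
Lemma Cnn n : C n n = 1.
Proof. unfold C. rewrite Nat.sub_diag. simpl. field. apply INR_fact_neq_0. Qed.

Lemma Tpascal X Y n g : T X Y (S n) g = X * T X Y n g + Y * T X Y n (fun k => g (S k)).
Proof.
  unfold T. destruct n as [|m].
  - simpl. rewrite !Cn0, Cnn. simpl. ring.
  - rewrite (decomp_sum _ (S (S m))) by lia. simpl pred.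
    rewrite tech5.
    rewrite (decomp_sum _ (S m)) by lia. simpl pred.
    rewrite tech5.
    assert (H : sum_f_R0 (fun i : nat =>
     C (S (S m)) (S i) * X ^ (S (S m) - S i) * Y ^ S i * g (S i)) m =
     X * sum_f_R0 (fun i : nat => C (S m) (S i) * X ^ (S m - S i) * Y ^ S i * g (S i)) m
     + Y * sum_f_R0 (fun k : nat => C (S m) k * X ^ (S m - k) * Y ^ k * g (S k)) m).
    { rewrite !scal_sum, <- plus_sum. apply sum_eq. intros i Hi.
      rewrite <- pascal by lia.
      replace (S (S m) - S i)%nat with (S (m-i)) by lia.
      replace (S m - S i)%nat with (m-i)%nat by lia.
      replace (S m - i)%nat with (S (m-i)) by lia.
      simpl. ring. }
    rewrite H, !Cn0, !Cnn, !Nat.sub_diag, !Nat.sub_0_r. simpl. ring.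
Qed.

Lemma main X Y P (H : nat -> R) (HR : forall j, H (j+4)%nat = P^2 * (X * H j + Y * H (S j))) :
  forall n m, P^(2*n) * T X Y n (fun k => H (m+k)%nat) = H (m + 4*n)%nat.
Proof.
  induction n as [|n IH]; intros m.
  - unfold T. simpl. rewrite Cn0, Nat.add_0_r. ring.
  - rewrite Tpascal.
    replace (P^(2*S n)) with (P^2 * P^(2*n)) by (rewrite <- pow_add; f_equal; lia).
    replace (fun k => H (m + S k)%nat) with (fun k => H (S m + k)%nat)
      by (apply functional_extensionality; intros k; f_equal; lia).
    replace (m + 4 * S n)%nat with ((m + 4*n) + 4)%nat by lia.
    rewrite HR.
    replace (S (m + 4*n)) with (S m + 4*n)%nat by lia.
    rewrite <- (IH m), <- (IH (S m)). ring.
Qed.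
Theorem lemma1 (a b c : R) (n : nat) :
  0 < a -> 0 < b -> 0 < c -> (1 <= n)%nat ->
  sum_f 1 n (fun k =>
    C n k * (a * b + c) ^ (n - k) * (a * b + 2 * c) ^ k
      * a ^ (xi k) * (a * b) ^ (Nat.div2 k) * c ^ (n - k)
      * genFib a b c k)
  = genFib a b c (4 * n).
Proof.
  intros Ha Hb Hc Hn.
  pose proof (main (c*(a*b+c)) (a*b+2*c) (a*b) (G a b c) (Grec4 a b c) n 0) as M.
  replace (0 + 4*n)%nat with (2 * (2*n))%nat in M by lia.
  rewrite Geven in M.
  assert (Hp : (a*b)^(2*n) <> 0) by (apply pow_nonzero; nra).
  apply (Rmult_eq_reg_l ((a*b)^(2*n))); [|exact Hp].
  replace (4*n)%nat with (2*(2*n))%nat by lia. rewrite <- M. f_equal.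
  unfold T, sum_f.
  rewrite (decomp_sum _ n) by lia.
  replace (G a b c (0+0)%nat) with 0 by (unfold G; rewrite Nat.add_0_r, genFib_0; ring).
  rewrite Rmult_0_r, Rplus_0_l.
  replace (pred n) with (n-1)%nat by lia.
  apply sum_eq. intros i Hi.
  rewrite Nat.add_1_r. simpl (0 + S i)%nat. unfold G.
  rewrite (Rpow_mult_distr c).
  ring.
Qed.
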